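(* Let $n\geqslant 2$ and $\alpha,\beta\in\mathbf{I}\mathbb{N}_{\infty}^n$. Then: (i) $\alpha\mathscr{L}\beta$ iff there exists $\sigma\in H(\mathbb{I})$ with $\alpha=\sigma\beta$; (ii) $\alpha\mathscr{R}\beta$ iff there exists $\sigma\in H(\mathbb{I})$ with $\alpha=\beta\sigma$; (iii) $\alpha\mathscr{H}\beta$ iff there exist $\sigma_1,\sigma_2\in H(\mathbb{I})$ with $\alpha=\sigma_1\beta$ and $\alpha=\beta\sigma_2$; (iv) $\alpha\mathscr{D}\beta$ iff there exist $\sigma_1,\sigma_2\in H(\mathbb{I})$ with $\alpha=\sigma_1\beta\sigma_2$; (v) $\mathscr{D}=\mathscr{J}$ on $\mathbf{I}\mathbb{N}_{\infty}^n$; (vi) every $\mathscr{J}$-class of $\mathbf{I}\mathbb{N}_{\infty}^n$ is finite and consists of pairwise incomparable elements with respect to the natural partial order $\preccurlyeq$.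
   Context: $\mathbb{N}=\{1,2,3,\ldots\}$, $n\geqslant 2$, and $\mathbb{N}^n$ carries the Euclidean metric $d$. A partial isometry of $\mathbb{N}^n$ is an injective partial map $\alpha\colon\mathbb{N}^n\rightharpoonup\mathbb{N}^n$ with $d((\mathbf{x})\alpha,(\mathbf{y})\alpha)=d(\mathbf{x},\mathbf{y})$ for all $\mathbf{x},\mathbf{y}\in\operatorname{dom}\alpha$; it is cofinite if $\mathbb{N}^n\setminus\operatorname{dom}\alpha$ and $\mathbb{N}^n\setminus\operatorname{ran}\alpha$ are finite. $\mathbf{I}\mathbb{N}_{\infty}^n$ is the monoid of all partial cofinite isometries of $\mathbb{N}^n$ under composition of partial maps written on the right. Its identity is the identity map $\mathbb{I}$ of $\mathbb{N}^n$ and $H(\mathbb{I})$ is its group of units. Green's relations on a semigroup $S$: $a\mathscr{R}b$ iff $aS^1=bS^1$; $a\mathscr{L}b$ iff $S^1a=S^1b$; $a\mathscr{J}b$ iff $S^1aS^1=S^1bS^1$; $\mathscr{D}=\mathscr{L}\circ\mathscr{R}$; $\mathscr{H}=\mathscr{L}\cap\mathscr{R}$. The natural partial order on the inverse semigroup $\mathbf{I}\mathbb{N}_{\infty}^n$ is $s\preccurlyeq t$ iff $s=te$ for some idempotent $e$. *)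

(* Defs.v *)
From mathcomp Require Import all_boot.
From Stdlib Require List.
Set Implicit Arguments. Unset Strict Implicit. Unset Printing Implicit Defensive.

(* A point is encoded by x : 'I_n -> nat where
   coordinate value k represents the positive integer k+1.  This shift
   is a bijection nat -> N preserving all differences, hence Euclidean
   distances, so it is an isometric identification of the metric spaces. *)
Definition pt (n : nat) := {ffun 'I_n -> nat}.

Definition absdiff (a b : nat) : nat := (a - b) + (b - a).

(* squared Euclidean distance; d(x,y) = sqrt (dist2 x y), and since sqrt is
   injective on nonnegative reals, d is preserved iff dist2 is preserved. *)
Definition dist2 n (x y : pt n) : nat := \sum_(i < n) (absdiff (x i) (y i)) ^ 2.

Definition ppmap n := pt n -> option (pt n).

Definition dom n (a : ppmap n) (x : pt n) : Prop := exists y, a x = Some y.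
Definition ran n (a : ppmap n) (y : pt n) : Prop := exists x, a x = Some y.

Definition pinjective n (a : ppmap n) : Prop :=
  forall x y z, a x = Some z -> a y = Some z -> x = y.

Definition pisometry n (a : ppmap n) : Prop :=
  forall x y x' y', a x = Some x' -> a y = Some y' -> dist2 x' y' = dist2 x y.

Definition finite_pred n (P : pt n -> Prop) : Prop :=
  exists s : seq (pt n), forall x, P x -> x \in s.

Definition cofinite n (a : ppmap n) : Prop :=
  finite_pred (fun x => ~ dom a x) /\ finite_pred (fun y => ~ ran a y).

Definition IN n (a : ppmap n) : Prop :=
  pinjective a /\ pisometry a /\ cofinite a.

(* composition of partial maps written on the right: x (a b) = (x a) b *)
Definition compR n (a b : ppmap n) : ppmap n := fun x => obind b (a x).

Definition idI n : ppmap n := fun x => Some x.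

(* S^1 (the monoid with identity adjoined; here S already contains it) *)
Definition IN1 n (u : ppmap n) : Prop := IN u \/ u = @idI n.

Definition greenR n (a b : ppmap n) : Prop :=
  forall c, (exists u, IN1 u /\ c = compR a u) <-> (exists u, IN1 u /\ c = compR b u).
Definition greenL n (a b : ppmap n) : Prop :=
  forall c, (exists u, IN1 u /\ c = compR u a) <-> (exists u, IN1 u /\ c = compR u b).
Definition greenJ n (a b : ppmap n) : Prop :=
  forall c, (exists u v, IN1 u /\ IN1 v /\ c = compR (compR u a) v) <->
            (exists u v, IN1 u /\ IN1 v /\ c = compR (compR u b) v).
Definition greenH n (a b : ppmap n) : Prop := greenL a b /\ greenR a b.
Definition greenD n (a b : ppmap n) : Prop :=
  exists c, IN c /\ greenL a c /\ greenR c b.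

(* group of units H(I): the H-class of the identity *)
Definition HI n (s : ppmap n) : Prop := IN s /\ greenH s (@idI n).

Definition npo n (s t : ppmap n) : Prop :=
  exists e, IN e /\ compR e e = e /\ s = compR t e.

(* Main.v *)
Require Import Defs.
From mathcomp Require Import all_boot.
From Stdlib Require List.
From mathcomp Require Import fingroup perm zify.
From Stdlib Require Import Classical FunctionalExtensionality.
Set Implicit Arguments. Unset Strict Implicit. Unset Printing Implicit Defensive.

Section S.
Variable n : nat.
Implicit Types (x y z w : pt n).

Lemma absdiff_nn a : absdiff a a = 0. Proof. rewrite /absdiff; lia. Qed.

Lemma dist2_single x y (j : 'I_n) : (forall k, k != j -> x k = y k) ->
  dist2 x y = absdiff (x j) (y j) ^ 2.
Proof.
move=> H; rewrite /dist2 (bigD1 j) //= big1 ?addn0 // => k /H ->.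
by rewrite absdiff_nn.
Qed.

Lemma dist2_diff y z w (j : 'I_n) : (forall k, k != j -> z k = w k) ->
  dist2 y z + absdiff (y j) (w j) ^ 2 = dist2 y w + absdiff (y j) (z j) ^ 2.
Proof.
move=> H; rewrite /dist2 (bigD1 j) //= [in RHS](bigD1 j) //=.
rewrite (eq_bigr (fun k => absdiff (y k) (w k) ^ 2)); last by move=> k /H ->.
move: (absdiff (y j) (z j) ^ 2) (absdiff (y j) (w j) ^ 2) (\sum_(_ | _) _) => p q r; lia.
Qed.

Lemma dist2_1 y z : dist2 y z = 1 -> exists j : 'I_n,
  (forall k, k != j -> y k = z k) /\ absdiff (y j) (z j) = 1.
Proof.
rewrite /dist2 => H.
case: (pickP (fun j => absdiff (y j) (z j) ^ 2 != 0)) => [j Hj|H0]; last first.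
  move: H; rewrite big1 // => i _; by move: (H0 i) => /negbFE/eqP.
exists j; move: H; rewrite (bigD1 j) //= => H.
move: Hj H; rewrite -lt0n; set t := absdiff (y j) (z j) ^ 2 => Ht H.
have Hr : \sum_(i | i != j) absdiff (y i) (z i) ^ 2 == 0.
  apply/eqP; move: H; move: (\sum_(i | i != j) _) => r; lia.
split.
  move=> k Hk; move: Hr; rewrite sum_nat_eq0 => /forallP /(_ k); rewrite Hk /=.
  rewrite expn_eq0 /= /absdiff => /eqP; lia.
have : t = 1 by move/eqP: Hr H; move: (\sum_(i | i != j) _) => r; clearbody t; lia.
rewrite /t; case: (absdiff (y j) (z j)) => [|[|d]] //.
Qed.

Lemma sq_ne2 d : d ^ 2 <> 2.
Proof. case: d => [|[|d]] //; rewrite expnS expn1; nia. Qed.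

Lemma adsq a b : absdiff a b.+1 ^ 2 + 2 * a = absdiff a b ^ 2 + 2 * b + 1.
Proof.
rewrite /absdiff; case: (leqP a b) => H.
  have [d ->] : exists d, b = a + d by exists (b - a); lia.
  have -> : a - (a + d).+1 = 0 by lia.
  have -> : (a + d).+1 - a = d.+1 by lia.
  have -> : a - (a + d) = 0 by lia.
  have -> : (a + d) - a = d by lia.
  rewrite !add0n !expnS !expn0 !muln1; nia.
have [d ->] : exists d, a = b + d.+1 by exists (a - b).-1; lia.
have -> : (b + d.+1) - b.+1 = d by lia.
have -> : b.+1 - (b + d.+1) = 0 by lia.
have -> : (b + d.+1) - b = d.+1 by lia.
have -> : b - (b + d.+1) = 0 by lia.
rewrite !addn0 !expnS !expn0 !muln1; nia.
Qed.

Lemma bigger (s : seq (pt n)) : exists N, forall z, z \in s -> forall k, z k < N.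
Proof.
elim: s => [|z s [N HN]]; first by exists 0.
exists (N + \sum_k z k + 1) => w; rewrite in_cons => /orP [/eqP -> | /HN H] k.
  rewrite (bigD1 k) //=; lia.
by move: (H k); lia.
Qed.

Lemma notin_big (s : seq (pt n)) N x k : (forall z, z \in s -> forall k, z k < N) ->
  N <= x k -> x \notin s.
Proof. move=> H Hk; apply/negP => /H /(_ k); lia. Qed.

Lemma other (hn : 2 <= n) (i : 'I_n) : exists k : 'I_n, k != i.
Proof.
have h0 : 0 < n by lia. have h1 : 1 < n by lia.
case: (eqVneq i (Ordinal h0)) => [->|H]; last by exists (Ordinal h0); rewrite eq_sym.
by exists (Ordinal h1).
Qed.

Definition permute (q : {perm 'I_n}) x : pt n := [ffun j => x (q j)].
Definition shape a (q : {perm 'I_n}) := forall x y, a x = Some y -> y = permute q x.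

Definition bump x (i : 'I_n) k : pt n := [ffun j => if j == i then x j + k else x j].


Ltac gen_all := repeat match goal with
  | H : context [absdiff ?u ?v ^ 2] |- _ => let t := fresh "t" in set t := absdiff u v ^ 2 in *; clearbody t
  | H : context [dist2 ?u ?v] |- _ => let t := fresh "t" in set t := dist2 u v in *; clearbody t
  end.

Lemma ST (hn : 2 <= n) a : IN a -> exists q, shape a q.
Proof.
move=> [Hinj [Hiso [[s Hs] [s' Hs']]]].
have Hdom : forall x, x \notin s -> exists y, a x = Some y.
  move=> x Hx; apply: NNPP => H; move: (Hs x H); by rewrite (negbTE Hx).
have Hran : forall z, z \notin s' -> exists x, a x = Some z.
  move=> x Hx; apply: NNPP => H; move: (Hs' x H); by rewrite (negbTE Hx).
have [N HN] := bigger s. have [N' HN'] := bigger s'.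
pose o : pt n := [ffun _ => N].
have Hbig : forall x k, N <= x k -> exists y, a x = Some y.
  by move=> x k H; apply: Hdom; apply: (notin_big HN H).
have h0 : 0 < n by lia.
have [Q HQ] : exists Q, a o = Some Q by apply: (Hbig o (Ordinal h0)); rewrite ffunE.
have Hb : forall i k, exists y, a (bump o i k) = Some y.
  by move=> i k; apply: (Hbig _ i); rewrite !ffunE eqxx; lia.
pose P i := odflt o (a (bump o i 1)).
have HP : forall i, a (bump o i 1) = Some (P i).
  by move=> i; rewrite /P; case: (Hb i 1) => y ->.
have HP1 : forall i, dist2 (P i) Q = 1.
  move=> i; rewrite (Hiso _ _ _ _ (HP i) HQ) (dist2_single (j:=i)); last first.
    by move=> k Hk; rewrite !ffunE (negbTE Hk).
  rewrite !ffunE eqxx.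
  by have -> : absdiff (N + 1) N = 1 by rewrite /absdiff; lia.
pose cond i j := [forall k, (k != j) ==> (P i k == Q k)] && (absdiff (P i j) (Q j) == 1).
pose p i := odflt i [pick j | cond i j].
have Hp : forall i, cond i (p i).
  move=> i; rewrite /p; case: pickP => [j //|H0] /=.
  have [j [H1 H2]] := dist2_1 (HP1 i).
  move: (H0 j); rewrite /cond H2 eqxx andbT => /negbT/negP; case.
  by apply/forallP => k; apply/implyP => /H1 ->.
have Hp1 : forall i k, k != p i -> P i k = Q k.
  by move=> i k Hk; move: (Hp i) => /andP [/forallP /(_ k) /implyP /(_ Hk) /eqP].
have Hp2 : forall i, absdiff (P i (p i)) (Q (p i)) = 1.
  by move=> i; move: (Hp i) => /andP [_ /eqP].
have p_inj : injective p.
  move=> i i' E; apply/eqP; apply: contraT => Hii.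
  have D1 : dist2 (bump o i' 1) (bump o i 1) = 2.
    have := dist2_diff (bump o i' 1) (z:=bump o i 1) (w:=o) (j:=i).
    rewrite !ffunE eqxx (negbTE Hii) absdiff_nn.
    rewrite [dist2 _ o](dist2_single (j:=i')); last by move=> k Hk; rewrite !ffunE (negbTE Hk).
    rewrite !ffunE eqxx.
    have -> : absdiff N (N + 1) = 1 by rewrite /absdiff; lia.
    have -> : absdiff (N + 1) N = 1 by rewrite /absdiff; lia.
    have Hk' : forall k, k != i -> bump o i 1 k = o k by move=> k Hk; rewrite !ffunE (negbTE Hk).
    move=> H; have := H Hk'; lia.
  rewrite -(Hiso _ _ _ _ (HP i') (HP i)) (dist2_single (j:=p i)) in D1; last first.
    by move=> k Hk; rewrite (Hp1 i) // (Hp1 i') // -E.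
  have A1 := Hp2 i; have A2 := Hp2 i'; rewrite -E in A2.
  have : absdiff (P i' (p i)) (P i (p i)) = 0 \/ absdiff (P i' (p i)) (P i (p i)) = 2.
    by move: A1 A2; rewrite /absdiff; lia.
  by case=> Ht; rewrite Ht in D1.
pose pp := perm p_inj.
have Hmain : forall i x y, a x = Some y -> y (p i) = x i.
  move=> i; set j := p i.
  have Hsign : P i j = Q j + 1 \/ P i j + 1 = Q j by have := Hp2 i; rewrite -/j /absdiff; lia.
  have Hgen : forall x y, a x = Some y ->
     (P i j = Q j + 1 -> y j + N = x i + Q j) /\ (P i j + 1 = Q j -> y j + x i = Q j + N).
    move=> x y Hxy.
    have E1 := dist2_diff (y) (z:=P i) (w:=Q) (j:=j) (Hp1 i).
    have Hk' : forall k, k != i -> bump o i 1 k = o k by move=> k Hk; rewrite !ffunE (negbTE Hk).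
    have E2 := dist2_diff x Hk'.
    rewrite (Hiso _ _ _ _ Hxy (HP i)) (Hiso _ _ _ _ Hxy HQ) in E1.
    rewrite !ffunE eqxx addn1 in E2.
    have A1 := adsq (x i) N.
    split => Hs0.
      rewrite Hs0 addn1 in E1. have A2 := adsq (y j) (Q j).
      gen_all; lia.
    rewrite -Hs0 addn1 in E1. have A2 := adsq (y j) (P i j).
    rewrite -Hs0; gen_all; lia.
  have Hplus : forall x y, a x = Some y -> y j + N = x i + Q j.
    case: Hsign => Hsg; first by move=> x y /Hgen [/(_ Hsg)].
    have [y Hy] := Hb i (Q j + 1).
    have := (Hgen _ _ Hy).2 Hsg; rewrite !ffunE eqxx; lia.
  have HQN : Q j = N.
    case: (ltngtP (Q j) N) => HQj //.
    - have [k Hk] := other hn i.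
      pose x0 : pt n := [ffun k' => if k' == i then 0 else N].
      have [y Hy] : exists y, a x0 = Some y by apply: (Hbig x0 k); rewrite ffunE (negbTE Hk).
      have := Hplus _ _ Hy; rewrite ffunE eqxx; lia.
    - have [k Hk] := other hn j.
      pose z0 : pt n := [ffun k' => if k' == j then 0 else N'].
      have [x Hx] : exists x, a x = Some z0.
        by apply: Hran; apply: (notin_big HN' (k:=k)); rewrite ffunE (negbTE Hk).
      have := Hplus _ _ Hx; rewrite ffunE eqxx; lia.
  by move=> x y /Hplus; rewrite HQN; lia.
exists pp^-1%g => x y Hxy; apply/ffunP => j; rewrite ffunE.
have := Hmain (pp^-1%g j) x y Hxy.
by rewrite -(permE p_inj) permKV.
Qed.


Implicit Types (a b c u v : ppmap n) (q r : {perm 'I_n}).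
Lemma permuteM q r x : permute q (permute r x) = permute (q * r)%g x.
Proof. by apply/ffunP => j; rewrite !ffunE permM. Qed.
Lemma permute1 x : permute 1%g x = x.
Proof. by apply/ffunP => j; rewrite !ffunE perm1. Qed.
Lemma permuteK q x : permute q^-1%g (permute q x) = x.
Proof. by rewrite permuteM mulVg permute1. Qed.
Lemma permuteKV q x : permute q (permute q^-1%g x) = x.
Proof. by rewrite permuteM mulgV permute1. Qed.
Lemma permute_inj q : injective (permute q).
Proof. by move=> x y E; rewrite -(permuteK q x) E permuteK. Qed.
Lemma dist2_permute q x y : dist2 (permute q x) (permute q y) = dist2 x y.
Proof.
rewrite /dist2 (reindex_inj (@perm_inj _ q^-1%g)) /=.
by apply: eq_bigr => i _; rewrite !ffunE permKV.
Qed.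

Definition Uq q : ppmap n := fun x => Some (permute q x).

Lemma compR_assoc a b c : compR (compR a b) c = compR a (compR b c).
Proof. by apply: functional_extensionality => x; rewrite /compR; case: (a x). Qed.
Lemma compR_idl a : compR (@idI n) a = a.
Proof. by apply: functional_extensionality => x. Qed.
Lemma compR_idr a : compR a (@idI n) = a.
Proof. by apply: functional_extensionality => x; rewrite /compR; case: (a x). Qed.
Lemma U_comp q r : compR (Uq q) (Uq r) = Uq (r * q)%g.
Proof. by apply: functional_extensionality => x; rewrite /compR /Uq /= permuteM. Qed.
Lemma U1 : Uq 1%g = @idI n.
Proof. by apply: functional_extensionality => x; rewrite /Uq permute1. Qed.

Lemma IN_U q : IN (Uq q).
Proof.
split; [|split].
- by move=> x y z [<-] [] /permute_inj.
- by move=> x y x' y' [<-] [<-]; rewrite dist2_permute.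
- split; exists [::] => x H; exfalso; apply: H.
    by exists (permute q x).
  by exists (permute q^-1%g x); rewrite /Uq permuteKV.
Qed.
Lemma IN_id : IN (@idI n).
Proof. by rewrite -U1; apply: IN_U. Qed.
Lemma IN1_IN u : IN1 u -> IN u.
Proof. by case=> [//|->]; apply: IN_id. Qed.
Lemma shape_U q : shape (Uq q) q.
Proof. by move=> x y [<-]. Qed.

Lemma IN_comp (hn : 2 <= n) a b : IN a -> IN b -> IN (compR a b).
Proof.
move=> Ha Hb; have [qa Sa] := ST hn Ha; have [qb Sb] := ST hn Hb.
case: Ha => [Ia [Ja [[sa Hsa] [sa' Hsa']]]]; case: Hb => [Ib [Jb [[sb Hsb] [sb' Hsb']]]].
split; [|split; [|split]].
- move=> x y z; rewrite /compR.
  case Ex: (a x) => [x1|] //=; case Ey: (a y) => [y1|] //= H1 H2.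
  have E := Ib _ _ _ H1 H2; subst; exact: Ia Ex Ey.
- move=> x y x' y'; rewrite /compR.
  case Ex: (a x) => [x1|] //=; case Ey: (a y) => [y1|] //= H1 H2.
  by rewrite (Jb _ _ _ _ H1 H2) (Ja _ _ _ _ Ex Ey).
- exists (sa ++ map (permute qa^-1%g) sb) => x Hx; rewrite mem_cat.
  case Ex: (a x) => [y|]; last by rewrite Hsa // => [[y]]; rewrite Ex.
  apply/orP; right.
  have -> : x = permute qa^-1%g y by rewrite (Sa _ _ Ex) permuteK.
  apply: map_f; apply: Hsb => [[z Hz]]; apply: Hx; exists z; by rewrite /compR Ex.
- exists (sb' ++ map (permute qb) sa') => z Hz; rewrite mem_cat.
  case: (classic (ran b z)) => [[y Hy]|H]; last by rewrite Hsb'.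
  apply/orP; right; rewrite (Sb _ _ Hy); apply: map_f; apply: Hsa' => [[x Hx]].
  by apply: Hz; exists x; rewrite /compR Hx.
Qed.

Lemma FO (D : pt n -> Prop) (w : {perm 'I_n}) : (forall x, D x -> D (permute w x)) ->
  forall x, D (permute w x) -> D x.
Proof.
move=> H.
have Hk : forall k x, D x -> D (permute (w ^+ k)%g x).
  elim=> [|k IH] x Dx; first by rewrite expg0 permute1.
  by rewrite expgS -permuteM; apply: H; apply: IH.
move=> x /(Hk (#[w]%g.-1)); rewrite permuteM -expgSr prednK ?order_gt0 //.
by rewrite expg_order permute1.
Qed.


Variable hn : 2 <= n.

Lemma UUK q a : compR (Uq q^-1%g) (compR (Uq q) a) = a.
Proof. by rewrite -compR_assoc U_comp mulgV U1 compR_idl. Qed.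
Lemma UKU q a : compR (Uq q) (compR (Uq q^-1%g) a) = a.
Proof. by rewrite -compR_assoc U_comp mulVg U1 compR_idl. Qed.

Lemma greenL_of a b q : a = compR (Uq q) b -> greenL a b.
Proof.
move=> E c; split => [[u [Hu ->]]|[u [Hu ->]]].
  exists (compR u (Uq q)); split; last by rewrite E compR_assoc.
  by left; exact: (IN_comp hn (IN1_IN Hu) (IN_U q)).
exists (compR u (Uq q^-1%g)); split; last by rewrite E !compR_assoc UUK.
by left; exact: (IN_comp hn (IN1_IN Hu) (IN_U _)).
Qed.

Lemma greenR_of a b q : a = compR b (Uq q) -> greenR a b.
Proof.
move=> E c; split => [[u [Hu ->]]|[u [Hu ->]]].
  exists (compR (Uq q) u); split; last by rewrite E compR_assoc.
  by left; exact: (IN_comp hn (IN_U q) (IN1_IN Hu)).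
exists (compR (Uq q^-1%g) u); split; last by rewrite E !compR_assoc UKU.
by left; exact: (IN_comp hn (IN_U _) (IN1_IN Hu)).
Qed.

Lemma HI_U q : HI (Uq q).
Proof.
split; first exact: IN_U.
split; [apply: (greenL_of (q:=q)); by rewrite compR_idr
       | apply: (greenR_of (q:=q)); by rewrite compR_idl].
Qed.

Lemma HI_inv s : HI s -> exists q, s = Uq q.
Proof.
move=> [Hs [_ HR]].
have [q Sq] := ST hn Hs.
have [u [_ Hu]] : exists u, IN1 u /\ @idI n = compR s u.
  by apply: (HR (@idI n)).2; exists (@idI n); split; [right | rewrite compR_idl].
exists q; apply: functional_extensionality => x.
have := f_equal (fun f => f x) Hu; rewrite /compR /idI.
by case Ex: (s x) => [y|] //= _; rewrite (Sq _ _ Ex).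
Qed.

Lemma solve_l q1 q2 : exists r, forall x, permute r (permute q1 x) = permute q2 x.
Proof. by exists (q2 * q1^-1)%g => x; rewrite permuteM -mulgA mulVg mulg1. Qed.
Lemma solve_r q1 q2 : exists r, forall x, permute q1 (permute r x) = permute q2 x.
Proof. by exists (q1^-1 * q2)%g => x; rewrite permuteM mulgA mulgV mul1g. Qed.

Lemma L_units a b u v : IN a -> IN b -> a = compR u b -> b = compR v a ->
  exists q, a = compR (Uq q) b.
Proof.
move=> Ha Hb Eu Ev.
have [qa Sa] := ST hn Ha; have [qb Sb] := ST hn Hb.
have [r Hr] := solve_r qb qa.
exists r; apply: functional_extensionality => x; rewrite /compR /Uq /=.
case Ex: (a x) => [y|].
  have [x' Hx'] : exists x', b x' = Some y.
    by move: Ex; rewrite Eu /compR; case: (u x) => //= x' H; exists x'.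
  have -> : permute r x = x'.
    by apply: (@permute_inj qb); rewrite Hr -(Sa _ _ Ex) (Sb _ _ Hx').
  by rewrite Hx'.
case Eb: (b (permute r x)) => [y|] //.
have [x'' Hx''] : exists x'', a x'' = Some y.
  by move: Eb; rewrite Ev /compR; case: (v _) => //= x'' H; exists x''.
have : x'' = x.
  by apply: (@permute_inj qa); rewrite -(Sa _ _ Hx'') -Hr (Sb _ _ Eb).
by move=> E; rewrite E Ex in Hx''.
Qed.

Lemma R_units a b u v : IN a -> IN b -> a = compR b u -> b = compR a v ->
  exists q, a = compR b (Uq q).
Proof.
move=> Ha Hb Eu Ev.
have [qa Sa] := ST hn Ha; have [qb Sb] := ST hn Hb.
have [r Hr] := solve_l qb qa.
exists r; apply: functional_extensionality => x; rewrite /compR /Uq.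
case Eb: (b x) => [y|] /=.
  have Ey := Sb _ _ Eb.
  move: Eb; rewrite Ev /compR; case Ea: (a x) => [z|] //= _.
  by rewrite (Sa _ _ Ea) Ey Hr.
by rewrite Eu /compR Eb.
Qed.

Lemma J_units a b u v u' v' : IN a -> IN b -> IN u -> IN u' ->
  a = compR (compR u b) v -> b = compR (compR u' a) v' ->
  exists q1 q2, a = compR (compR (Uq q1) b) (Uq q2).
Proof.
move=> Ha Hb Hu Hu' Ea Eb.
have [qa Sa] := ST hn Ha; have [qb Sb] := ST hn Hb.
have [qu Su] := ST hn Hu; have [qu' Su'] := ST hn Hu'.
have D1 : forall x, Defs.dom a x -> Defs.dom b (permute qu x).
  move=> x [y]; rewrite Ea /compR; case Eu: (u x) => [z|] //=.
  case Ebz: (b z) => [w|] //= _; exists w; by rewrite -(Su _ _ Eu).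
have D2 : forall x, Defs.dom b x -> Defs.dom a (permute qu' x).
  move=> x [y]; rewrite Eb /compR; case Eu: (u' x) => [z|] //=.
  case Ebz: (a z) => [w|] //= _; exists w; by rewrite -(Su' _ _ Eu).
have Dc : forall x, Defs.dom a x -> Defs.dom a (permute (qu' * qu)%g x).
  by move=> x /D1 /D2; rewrite permuteM.
have D3 : forall x, Defs.dom b (permute qu x) -> Defs.dom a x.
  by move=> x /D2; rewrite permuteM; apply: (FO Dc).
have [r Hr] := solve_l (qb * qu)%g qa.
exists qu, r; apply: functional_extensionality => x; rewrite /compR /Uq /=.
case Ex: (a x) => [y|].
  have [w Hw] := D1 x (ex_intro _ y Ex).
  by rewrite Hw /= (Sa _ _ Ex) (Sb _ _ Hw) [permute qb _]permuteM Hr.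
case Ebx: (b (permute qu x)) => [w|] //=.
have [y Hy] := D3 x (ex_intro _ w Ebx); by rewrite Ex in Hy.
Qed.


Lemma L_iff a b : IN a -> IN b -> (greenL a b <-> exists s, HI s /\ a = compR s b).
Proof.
move=> Ha Hb; split.
  move=> H.
  have [u [Hu Eu]] : exists u, IN1 u /\ a = compR u b.
    by apply: (H a).1; exists (@idI n); split; [right | rewrite compR_idl].
  have [v [Hv Ev]] : exists v, IN1 v /\ b = compR v a.
    by apply: (H b).2; exists (@idI n); split; [right | rewrite compR_idl].
  have [q Eq] := L_units Ha Hb Eu Ev.
  by exists (Uq q); split; [exact: HI_U|].
move=> [s [Hs E]]; have [q Eq] := HI_inv Hs; subst s; exact: greenL_of E.
Qed.

Lemma R_iff a b : IN a -> IN b -> (greenR a b <-> exists s, HI s /\ a = compR b s).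
Proof.
move=> Ha Hb; split.
  move=> H.
  have [u [Hu Eu]] : exists u, IN1 u /\ a = compR b u.
    by apply: (H a).1; exists (@idI n); split; [right | rewrite compR_idr].
  have [v [Hv Ev]] : exists v, IN1 v /\ b = compR a v.
    by apply: (H b).2; exists (@idI n); split; [right | rewrite compR_idr].
  have [q Eq] := R_units Ha Hb Eu Ev.
  by exists (Uq q); split; [exact: HI_U|].
move=> [s [Hs E]]; have [q Eq] := HI_inv Hs; subst s; exact: greenR_of E.
Qed.

Lemma D_iff a b : IN a -> IN b -> (greenD a b <->
  exists s1 s2, HI s1 /\ HI s2 /\ a = compR (compR s1 b) s2).
Proof.
move=> Ha Hb; split.
  move=> [c [Hc [HL HR]]].
  have [s1 [H1 E1]] := (L_iff Ha Hc).1 HL; have [s2 [H2 E2]] := (R_iff Hc Hb).1 HR.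
  by exists s1, s2; rewrite E1 E2 compR_assoc.
move=> [s1 [s2 [H1 [H2 E]]]].
have Hc : IN (compR b s2) by exact: (IN_comp hn Hb H2.1).
exists (compR b s2); split; first exact: Hc.
split; first by apply/(L_iff Ha Hc); exists s1; rewrite E compR_assoc.
by apply/(R_iff Hc Hb); exists s2.
Qed.

Lemma Jhalf a b q1 q2 : a = compR (compR (Uq q1) b) (Uq q2) -> forall c,
  (exists u v, IN1 u /\ IN1 v /\ c = compR (compR u a) v) ->
  (exists u v, IN1 u /\ IN1 v /\ c = compR (compR u b) v).
Proof.
move=> E c [u [v [Hu [Hv ->]]]].
exists (compR u (Uq q1)), (compR (Uq q2) v); split; [|split].
- by left; exact: (IN_comp hn (IN1_IN Hu) (IN_U q1)).
- by left; exact: (IN_comp hn (IN_U q2) (IN1_IN Hv)).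
- by rewrite E !compR_assoc.
Qed.

Lemma J_of_eq a b q1 q2 : a = compR (compR (Uq q1) b) (Uq q2) -> greenJ a b.
Proof.
move=> E.
have E' : b = compR (compR (Uq q1^-1%g) a) (Uq q2^-1%g).
  by rewrite E !compR_assoc U_comp mulVg U1 compR_idr UUK.
by move=> c; split; [apply: (Jhalf E) | apply: (Jhalf E')].
Qed.

Lemma DJ_iff a b : IN a -> IN b -> (greenD a b <-> greenJ a b).
Proof.
move=> Ha Hb; split.
  move=> /(D_iff Ha Hb) [s1 [s2 [H1 [H2 E]]]].
  have [q1 E1] := HI_inv H1; have [q2 E2] := HI_inv H2; subst s1 s2.
  exact: J_of_eq E.
move=> H.
have [u [v [Hu [Hv Ea]]]] : exists u v, IN1 u /\ IN1 v /\ a = compR (compR u b) v.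
  apply: (H a).1; exists (@idI n), (@idI n); split; [right|split; [right|]] => //.
  by rewrite compR_idl compR_idr.
have [u' [v' [Hu' [Hv' Eb]]]] : exists u v, IN1 u /\ IN1 v /\ b = compR (compR u a) v.
  apply: (H b).2; exists (@idI n), (@idI n); split; [right|split; [right|]] => //.
  by rewrite compR_idl compR_idr.
have [q1 [q2 E]] := J_units Ha Hb (IN1_IN Hu) (IN1_IN Hu') Ea Eb.
by apply/(D_iff Ha Hb); exists (Uq q1), (Uq q2); split; [exact: HI_U|split; [exact: HI_U|]].
Qed.

End S.

Lemma In_mem (T : eqType) (x : T) (s : seq T) : x \in s -> List.In x s.
Proof.
elim: s => [//|y s IH]; rewrite in_cons => /orP [/eqP ->|/IH H]; [left|right] => //.
Qed.

Unset Implicit Arguments.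

Theorem theorem3p8 (n : nat) (hn : 2 <= n) :
  (forall alpha beta : ppmap n, IN alpha -> IN beta ->
     (greenL alpha beta <-> exists sigma, HI sigma /\ alpha = compR sigma beta) /\
     (greenR alpha beta <-> exists sigma, HI sigma /\ alpha = compR beta sigma) /\
     (greenH alpha beta <-> exists sigma1 sigma2, HI sigma1 /\ HI sigma2 /\
                              alpha = compR sigma1 beta /\ alpha = compR beta sigma2) /\
     (greenD alpha beta <-> exists sigma1 sigma2, HI sigma1 /\ HI sigma2 /\
                              alpha = compR (compR sigma1 beta) sigma2)) /\
  (forall alpha beta : ppmap n, IN alpha -> IN beta ->
     (greenD alpha beta <-> greenJ alpha beta)) /\
  (forall alpha : ppmap n, IN alpha ->
     (exists l : list (ppmap n), forall beta, IN beta -> greenJ alpha beta -> List.In beta l) /\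
     (forall beta gamma, IN beta -> IN gamma -> greenJ alpha beta -> greenJ alpha gamma ->
        npo beta gamma -> beta = gamma)).
Proof.
split; [|split].
- move=> a b Ha Hb; split; [exact: L_iff|split; [exact: R_iff|split; [|exact: D_iff]]].
  rewrite /greenH (L_iff hn Ha Hb) (R_iff hn Ha Hb); split.
    by move=> [[s1 [H1 E1]] [s2 [H2 E2]]]; exists s1, s2.
  by move=> [s1 [s2 [H1 [H2 [E1 E2]]]]]; split; [exists s1|exists s2].
- move=> a b Ha Hb; exact: DJ_iff.
move=> a Ha; split.
  exists (List.flat_map (fun r1 => List.map (fun r2 => compR (compR (Uq r1) a) (Uq r2))
            (enum {perm 'I_n})) (enum {perm 'I_n})).
  move=> b Hb HJ.
  have HJ' : greenJ b a by move=> c; apply: iff_sym; apply: HJ.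
  move: HJ' => /(DJ_iff hn Hb Ha) /(D_iff hn Hb Ha) [s1 [s2 [H1 [H2 E]]]].
  have [q1 E1] := HI_inv hn H1; have [q2 E2] := HI_inv hn H2; subst.
  apply/List.in_flat_map; exists q1; split; first by apply: In_mem; rewrite mem_enum.
  by apply/List.in_map_iff; exists q2; split => //; apply: In_mem; rewrite mem_enum.
move=> b g Hb Hg Jb Jg [e [He [Ee Eb]]].
have Jbg : greenJ b g by move=> c; apply: iff_trans (iff_sym (Jb c)) (Jg c).
move: Jbg => /(DJ_iff hn Hb Hg) /(D_iff hn Hb Hg) [s1 [s2 [H1 [H2 E]]]].
have [q1 E1] := HI_inv hn H1; have [q2 E2] := HI_inv hn H2; subst s1 s2.
have Hbg : forall x, Defs.dom b x -> Defs.dom g x.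
  move=> x [y]; rewrite Eb /compR; case Egx: (g x) => [z|] //= _; by exists z.
have Hgb : forall x, Defs.dom g (permute q1 x) -> Defs.dom b x.
  move=> x [y Hy]; exists (permute q2 y); by rewrite E /compR /Uq /= Hy.
have Hc : forall y, Defs.dom g y -> Defs.dom g (permute q1^-1%g y).
  by move=> y Dy; apply: Hbg; apply: Hgb; rewrite permuteKV.
have Hgb' : forall x, Defs.dom g x -> Defs.dom b x.
  move=> x Dx; apply: Hgb; apply: (FO Hc); by rewrite permuteK.
have [qe Se] := ST hn He.
apply: functional_extensionality => x.
case Egx: (g x) => [y|].
  have [z Hz] := Hgb' x (ex_intro _ y Egx).
  have Ez : e y = Some z by move: Hz; rewrite Eb /compR Egx.
  have Ezz : e z = Some z by move: (f_equal (fun f => f y) Ee); rewrite /compR Ez.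
  have E3 := Se _ _ Ez; have E4 := Se _ _ Ezz.
  by rewrite Hz; congr Some; apply: (@permute_inj _ qe); rewrite -E3 -E4.
by rewrite Eb /compR Egx.
Qed.
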